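(* Let $\pi\in\mathfrak{S}_m$. If $\pi_1=1$, $\pi_m=m$, and $|\mathcal{O}_\pi|=2$, then $\pi$ and its reversal $\pi^R=\pi_m\pi_{m-1}\cdots\pi_1$ are super-strongly c-Wilf equivalent.
   Context: The standardization $\operatorname{st}(w)$ of a word of distinct integers replaces its smallest entry by 1, the next smallest by 2, etc. For $\pi\in\mathfrak{S}_m$ and $\sigma\in\mathfrak{S}_n$, $\operatorname{Em}(\pi,\sigma)=\{i\in[n-m+1]:\operatorname{st}(\sigma_i\cdots\sigma_{i+m-1})=\pi\}$. For a set $S$ of positive integers, $a^\pi_{n,S}$ is the number of $\sigma\in\mathfrak{S}_n$ with $\operatorname{Em}(\pi,\sigma)=S$; $\pi,\tau$ are super-strongly c-Wilf equivalent if $a^\pi_{n,S}=a^\tau_{n,S}$ for all $n,S$. The overlap set is $\mathcal{O}_\pi=\{i\in[m-1]:\operatorname{st}(\pi_{i+1}\cdots\pi_m)=\operatorname{st}(\pi_1\cdots\pi_{m-i})\}$. *)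

(* Defs.v *)
From mathcomp Require Import all_boot all_order all_fingroup.
Set Implicit Arguments. Unset Strict Implicit. Unset Printing Implicit Defensive.

(* Permutations of [m] are elements of 'S_m (values in 'I_m, i.e. 0-indexed);
   pword p is its one-line notation as a word of positive integers 1..m. *)
Definition pword m (p : 'S_m) : seq nat := [seq (p i).+1 | i <- enum 'I_m].

Definition st (w : seq nat) : seq nat := [seq count (fun y => y <= x) w | x <- w].

(* factor sigma_i ... sigma_{i+k-1} (1-indexed i) *)
Definition factor (w : seq nat) (i k : nat) : seq nat := take k (drop i.-1 w).

(* Em(pi, sigma) as the list of 1-indexed positions i in [n-m+1] *)
Definition Em m n (p : 'S_m) (s : 'S_n) : seq nat :=
  [seq i <- iota 1 (n - m + 1) | st (factor (pword s) i m) == pword p].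

(* a^pi_{n,S} : number of sigma in S_n with Em(pi,sigma) = S (as sets) *)
Definition acount m (p : 'S_m) (n : nat) (S : seq nat) : nat :=
  #|[set s : 'S_n | all (fun j => j \in S) (Em p s) && all (fun j => j \in Em p s) S]|.

Definition super_strongly_cWilf m (p q : 'S_m) : Prop :=
  forall (n : nat) (S : seq nat), acount p n S = acount q n S.

Definition overlaps m (p : 'S_m) : seq nat :=
  [seq i <- iota 1 (m.-1) |
     st (drop i (pword p)) == st (take (m - i) (pword p))].

Definition rev_perm m (p : 'S_m) : 'S_m := (perm (@rev_ord_inj m) * p)%g.

(* Main.v *)
Require Import Defs.
From mathcomp Require Import all_boot all_order all_fingroup.
From mathcomp Require Import zify.
Set Implicit Arguments. Unset Strict Implicit. Unset Printing Implicit Defensive.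

Lemma count_lt_sub (T : eqType) (P Q : pred T) (s : seq T) :
  (forall x, P x -> Q x) -> (exists2 x, x \in s & Q x && ~~ P x) ->
  count P s < count Q s.
Proof.
move=> PQ [x]; elim: s => [|y s IH] //= xin /andP[Qx nPx].
move: xin; rewrite in_cons => /orP[/eqP <-|xs].
  rewrite (negbTE nPx) Qx add0n add1n ltnS; exact: sub_count.
have := IH xs; rewrite Qx nPx => /(_ isT) lt.
case Py: (P y); first by rewrite (PQ _ Py) add1n add1n ltnS.
by rewrite add0n; apply: (leq_trans lt); apply: leq_addl.
Qed.

Lemma st_size w : size (st w) = size w.
Proof. by rewrite size_map. Qed.

Lemma nth_st w u : u < size w -> nth 0 (st w) u = count (fun y => y <= nth 0 w u) w.
Proof. by move=> h; rewrite (nth_map 0). Qed.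

Lemma st_lt w u v : u < size w -> v < size w ->
  (nth 0 (st w) u < nth 0 (st w) v) = (nth 0 w u < nth 0 w v).
Proof.
move=> hu hv; rewrite !nth_st //.
case: (ltnP (nth 0 w u) (nth 0 w v)) => h.
  apply: count_lt_sub => [x|]; first by move=> hx; apply: leq_trans hx (ltnW h).
  exists (nth 0 w v); first exact: mem_nth.
  by rewrite leqnn /= -ltnNge.
rewrite ltnNge; apply/negbF/sub_count => x hx; exact: leq_trans hx h.
Qed.

Lemma cnt_idx (a : seq nat) (P : pred nat) :
  count P a = count (fun j => P (nth 0 a j)) (iota 0 (size a)).
Proof. by rewrite -[in LHS](mkseq_nth 0 a) /mkseq count_map. Qed.

Lemma st_eq (a b : seq nat) : size a = size b ->
  (st a = st b) <-> (forall u v, u < size a -> v < size a ->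
     (nth 0 a u < nth 0 a v) = (nth 0 b u < nth 0 b v)).
Proof.
move=> hs; split.
  move=> e u v hu hv; rewrite -st_lt // e st_lt //; by rewrite -hs.
move=> h; apply: (@eq_from_nth _ 0); first by rewrite !st_size.
move=> i; rewrite st_size => hi; rewrite !nth_st -?hs //.
rewrite (cnt_idx a) (cnt_idx b) -hs.
apply: eq_in_count => j; rewrite mem_iota add0n => /andP[_ hj] /=.
by rewrite leqNgt [in RHS]leqNgt h.
Qed.

Definition wd n (s : 'S_n) (x : nat) : nat := nth 0 (pword s) x.

Lemma size_pword n (s : 'S_n) : size (pword s) = n.
Proof. by rewrite size_map size_enum_ord. Qed.

Lemma wdE n (s : 'S_n) (x : 'I_n) : wd s x = (s x).+1.
Proof. by rewrite /wd /pword (nth_map x) ?size_enum_ord // nth_ord_enum. Qed.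

Lemma wd_out n (s : 'S_n) x : n <= x -> wd s x = 0.
Proof. by move=> h; rewrite /wd nth_default // size_pword. Qed.

Lemma wd_lt n (s : 'S_n) x : x < n -> 0 < wd s x <= n.
Proof.
move=> h; have -> : x = Ordinal h by []. by rewrite wdE ltn_ord.
Qed.

Lemma wd_inj n (s : 'S_n) x y : x < n -> y < n -> wd s x = wd s y -> x = y.
Proof.
move=> hx hy; have -> : x = Ordinal hx by []; have -> : y = Ordinal hy by [].
rewrite !wdE => -[] /val_inj /perm_inj; by move=> ->.
Qed.

Lemma cnt_iota k m : count (fun j => j <= k) (iota 0 m) = minn k.+1 m.
Proof.
elim: m => [|m IH]; first by rewrite minn0.
rewrite -addn1 iotaD count_cat IH /= add0n; lia.
Qed.

Lemma st_pword m (p : 'S_m) : st (pword p) = pword p.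
Proof.
apply: (@eq_from_nth _ 0); first by rewrite st_size.
move=> i; rewrite st_size size_pword => hi.
rewrite nth_st ?size_pword //.
rewrite -/(wd p i) (_ : i = Ordinal hi) // wdE.
rewrite /pword count_map.
have pe : perm_eq [seq p j | j <- enum 'I_m] (enum 'I_m).
  apply: uniq_perm; first by rewrite map_inj_uniq ?enum_uniq //; apply: perm_inj.
    exact: enum_uniq.
  by move=> j; rewrite mem_enum; apply/mapP; exists (p^-1 j)%g; rewrite ?mem_enum ?permKV.
have := (seq.permP pe (fun j : 'I_m => j <= p (Ordinal hi))).
rewrite count_map => ->.
rewrite -(count_map val (fun j => j <= p (Ordinal hi))) val_enum_ord cnt_iota.
have := ltn_ord (p (Ordinal hi)); lia.
Qed.

Definition occ m n (R : nat -> nat -> bool) (s : 'S_n) (i : nat) : bool :=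
  (i + m <= n) &&
  [forall u : 'I_m, [forall v : 'I_m, (wd s (i+u) < wd s (i+v)) == R u v]].

Lemma occP m n R (s : 'S_n) i :
  occ m R s i <-> (i + m <= n /\ forall u v, u < m -> v < m ->
                     (wd s (i+u) < wd s (i+v)) = R u v).
Proof.
split.
  case/andP=> h /forallP H; split=> // u v hu hv.
  by have /forallP/(_ (Ordinal hv))/eqP := H (Ordinal hu).
case=> h H; apply/andP; split=> //; apply/forallP=> u; apply/forallP=> v.
by apply/eqP; apply: H.
Qed.

Lemma occ_ext m n R R' (s : 'S_n) i :
  (forall u v, u < m -> v < m -> R u v = R' u v) -> occ m R s i = occ m R' s i.
Proof.
move=> e; apply/idP/idP => /occP [h H]; apply/occP; split=> // u v hu hv.
  by rewrite -e // H.
by rewrite e // H.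
Qed.

Definition Rp m (p : 'S_m) (u v : nat) : bool := wd p u < wd p v.

Lemma mem_Em m n (p : 'S_m) (s : 'S_n) i :
  (i \in Em p s) = (0 < i) && occ m (Rp p) s i.-1.
Proof.
rewrite /Em mem_filter mem_iota /factor.
set f := take m (drop i.-1 (pword s)).
have sf : size f = minn m (n - i.-1).
  rewrite /f size_take size_drop size_pword; case: ifP; lia.
have nf : forall u, u < m -> nth 0 f u = wd s (i.-1 + u).
  by move=> u hu; rewrite /f nth_take // nth_drop.
apply/idP/idP.
  case/andP=> /eqP e /andP[h1 h2].
  have hs : size f = m by rewrite -st_size e size_pword.
  rewrite h1 /=; apply/occP; split; first by move: hs; rewrite sf; lia.
  rewrite -st_pword in e.
  have hs2 : size f = size (pword p) by rewrite hs size_pword.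
  have E := proj1 (st_eq hs2) e.
  move=> u v hu hv; rewrite -!nf //; apply: E; rewrite hs //.
case/andP=> h1 /occP [h2 H].
have hs : size f = m by rewrite sf; lia.
apply/andP; split; last by apply/andP; split; lia.
apply/eqP; rewrite -st_pword; apply/st_eq; rewrite ?hs ?size_pword // => u v hu hv.
by rewrite !nf // H.
Qed.

Lemma mem_overlaps m (p : 'S_m) d :
  (d \in overlaps p) <-> (0 < d < m /\ forall u v, u < m - d -> v < m - d ->
                           Rp p (d+u) (d+v) = Rp p u v).
Proof.
rewrite /overlaps mem_filter mem_iota.
have sz1 : size (drop d (pword p)) = m - d by rewrite size_drop size_pword.
have sz2 : size (take (m - d) (pword p)) = m - d.
  by rewrite size_takel // size_pword leq_subr.
split.
  case/andP=> /eqP e /andP[h1 h2]; split; first lia.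
  have sz : size (drop d (pword p)) = size (take (m - d) (pword p)) by rewrite sz1 sz2.
  move=> u v hu hv; have := (proj1 (st_eq sz) e u v); rewrite ?sz1 => /(_ hu hv).
  by rewrite !nth_drop !nth_take.
case=> h H; apply/andP; split; last by apply/andP; split; lia.
apply/eqP/st_eq; rewrite ?sz1 ?sz2 // => u v hu hv.
by rewrite !nth_drop !nth_take // -[_ < _]/(Rp p _ _) H.
Qed.

Definition Hpat m (R : nat -> nat -> bool) :=
  [/\ 2 < m, (forall u, 0 < u < m -> R 0 u), (forall u, u < m.-1 -> R u m.-1)
   & (forall d, 0 < d <= m - 3 ->
       ~ (forall u v, u < m - d -> v < m - d -> R (d+u) (d+v) = R u v))].

Lemma three_uniq (T : eqType) (s : seq T) x y z :
  uniq s -> size s = 2 -> x \in s -> y \in s -> z \in s ->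
  x != y -> y != z -> x != z -> False.
Proof.
move=> us ss xs ys zs xy yz xz.
have : size [:: x; y; z] <= size s.
  apply: uniq_leq_size; first by rewrite /= !inE negb_or xy xz yz.
  by move=> t; rewrite !inE => /or3P[] /eqP ->.
by rewrite ss.
Qed.

Lemma Hp_of m (p : 'S_m) : head 0 (pword p) = 1 -> last 0 (pword p) = m ->
  size (overlaps p) = 2 -> Hpat m (Rp p).
Proof.
move=> hh hl ho.
have m3 : 2 < m.
  have : size (overlaps p) <= m.-1.
    by rewrite /overlaps size_filter (leq_trans (count_size _ _)) // size_iota.
  rewrite ho; lia.
have w0 : wd p 0 = 1 by rewrite /wd nth0.
have wm : wd p m.-1 = m by have := nth_last 0 (pword p); rewrite size_pword hl.
have wr : forall u, u < m -> 0 < wd p u <= m by move=> u; apply: wd_lt.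
have wi : forall u v, u < m -> v < m -> wd p u = wd p v -> u = v.
  by move=> u v; apply: wd_inj.
have e0 : forall u, 0 < u < m -> Rp p 0 u.
  move=> u hu; rewrite /Rp w0; have h1 := wr u ltac:(lia).
  have h2 : wd p u <> 1.
    by move=> e; have := wi 0 u ltac:(lia) ltac:(lia); rewrite w0 e => /(_ erefl); lia.
  lia.
have em : forall u, u < m.-1 -> Rp p u m.-1.
  move=> u hu; rewrite /Rp wm; have h1 := wr u ltac:(lia).
  have h2 : wd p u <> m.
    by move=> e; have := wi u m.-1 ltac:(lia) ltac:(lia); rewrite wm e => /(_ erefl); lia.
  lia.
split=> // d hd ov.
have asym : forall u v, Rp p u v -> Rp p v u = false.
  by move=> u v; rewrite /Rp => h; apply/negbTE; rewrite -leqNgt ltnW.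
have o1 : d \in overlaps p by apply/mem_overlaps; split=> //; lia.
have o2 : m - 2 \in overlaps p.
  apply/mem_overlaps; split; first lia.
  move=> u v hu hv.
  have hm : m - 2 + 1 = m.-1 by lia.
  case: u hu => [|[|u]] hu; case: v hv => [|[|v]] hv //; try lia.
  - by rewrite /Rp !addn0 !ltnn.
  - by rewrite addn0 hm e0 ?em //; lia.
  - rewrite addn0 hm (asym (m - 2) m.-1) ?(asym 0 1) //; [apply: e0 | apply: em]; lia.
  - by rewrite /Rp !ltnn.
have o3 : m - 1 \in overlaps p.
  apply/mem_overlaps; split; first lia.
  move=> u v hu hv; have -> : u = 0 by lia. have -> : v = 0 by lia.
  by rewrite /Rp !ltnn.
apply: (three_uniq (filter_uniq _ (iota_uniq _ _)) ho o1 o2 o3); apply/eqP; lia.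
Qed.

Definition RC m (R : nat -> nat -> bool) (u v : nat) : bool := R (m.-1 - v) (m.-1 - u).

Lemma Hpat_RC m R : Hpat m R -> Hpat m (RC m R).
Proof.
case=> m3 e0 em no; split=> //.
- move=> u hu; rewrite /RC subn0; apply: em; lia.
- move=> u hu; rewrite /RC subnn; have -> : m.-1 - u = 0 + (m.-1 - u) by [].
  apply: e0; lia.
- move=> d hd H; apply: (no d hd) => u v hu hv.
  have := H (m.-1 - d - v) (m.-1 - d - u) ltac:(lia) ltac:(lia).
  rewrite /RC.
  have -> : m.-1 - (d + (m.-1 - d - u)) = u by lia.
  have -> : m.-1 - (d + (m.-1 - d - v)) = v by lia.
  have -> : m.-1 - (m.-1 - d - u) = d + u by lia.
  have -> : m.-1 - (m.-1 - d - v) = d + v by lia.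
  by [].
Qed.

Lemma occ_RCRC m n R (s : 'S_n) i : occ m (RC m (RC m R)) s i = occ m R s i.
Proof.
apply: occ_ext => u v hu hv; rewrite /RC.
have -> : m.-1 - (m.-1 - u) = u by lia.
have -> : m.-1 - (m.-1 - v) = v by lia.
by [].
Qed.

Lemma occ_gap m n R (s : 'S_n) i j : Hpat m R -> occ m R s i -> occ m R s j ->
  i < j -> m - 2 <= j - i.
Proof.
case=> m3 _ _ no /occP[hi Hi] /occP[hj Hj] ij.
rewrite leqNgt; apply/negP => lt.
apply: (no (j - i)); first lia.
move=> u v hu hv.
rewrite -Hi; try lia. rewrite -Hj; try lia.
have -> : i + (j - i + u) = j + u by lia.
have -> : i + (j - i + v) = j + v by lia.
by [].
Qed.

Lemma sorted_nth_lt n (l : seq 'I_n) i j (x0 : 'I_n) :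
  sorted (fun x y : 'I_n => x < y) l -> i < size l -> j < size l ->
  (nth x0 l i < nth x0 l j) = (i < j).
Proof.
move=> so hi hj.
have tr : transitive (fun x y : 'I_n => x < y) by move=> x y z; apply: ltn_trans.
case: (ltngtP i j) => h.
- have H := (sorted_ltn_nth tr x0 so); exact: (H i j hi hj h).
- have H := (sorted_ltn_nth tr x0 so); apply/negbTE; rewrite -leqNgt ltnW //; exact: (H j i hj hi h).
- by rewrite h ltnn.
Qed.

Lemma sub_lt k i : i < k -> k - i.+1 < k. Proof. lia. Qed.
Lemma sub_sub k i : i < k -> k - (k - i.+1).+1 = i. Proof. lia. Qed.

Lemma sub_cmp k i j : i < k -> j < k -> (k - i.+1 < k - j.+1) = (j < i).
Proof. move=> hi hj; apply/idP/idP; lia. Qed.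

Section Seg.
Variables (n a b : nat) (Hbn : b < n).

Definition Iab : {set 'I_n} := [set x : 'I_n | a < x < b].
Definition rho (x : 'I_n) : 'I_n := insubd x (a + b - x).

Lemma rho_val (x : 'I_n) : a <= x <= b -> nat_of_ord (rho x) = a + b - x.
Proof. move=> h; rewrite /rho insubdK //; rewrite unfold_in /=; lia. Qed.

Lemma rhoI x : x \in Iab -> rho x \in Iab.
Proof. rewrite !inE => h; rewrite rho_val; lia. Qed.

Lemma rhoK (x : 'I_n) : a <= x <= b -> rho (rho x) = x.
Proof. move=> h; apply: ord_inj; have e := rho_val h; rewrite rho_val; rewrite e; lia. Qed.

Definition Vs (s : 'S_n) : {set 'I_n} := s @: Iab.
Definition sq (s : 'S_n) : seq 'I_n := [seq x <- enum 'I_n | x \in Vs s].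
Definition gv (s : 'S_n) (v : 'I_n) : 'I_n := nth v (rev (sq s)) (index v (sq s)).

Lemma sq_sorted s : sorted (fun x y : 'I_n => x < y) (sq s).
Proof.
apply: sorted_filter; first by move=> x y z; apply: ltn_trans.
have := iota_ltn_sorted 0 n; rewrite -val_enum_ord sorted_map; exact.
Qed.

Lemma sq_uniq s : uniq (sq s).
Proof. exact: filter_uniq (enum_uniq _). Qed.

Lemma mem_sq s v : (v \in sq s) = (v \in Vs s).
Proof. by rewrite mem_filter mem_enum andbT. Qed.

Lemma gvE s v : v \in Vs s ->
  gv s v = nth v (sq s) (size (sq s) - (index v (sq s)).+1).
Proof. move=> h; rewrite /gv nth_rev // index_mem mem_sq //. Qed.

Lemma gv_mem s v : v \in Vs s -> gv s v \in Vs s.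
Proof.
move=> h; rewrite gvE // -mem_sq mem_nth //.
apply: sub_lt; by rewrite index_mem mem_sq.
Qed.

Lemma gvK s v : v \in Vs s -> gv s (gv s v) = v.
Proof.
move=> h; have hg := gv_mem h.
have hi : index v (sq s) < size (sq s) by rewrite index_mem mem_sq.
rewrite (gvE hg) {2}(gvE h) index_uniq ?sq_uniq ?sub_lt //.
rewrite sub_sub //.
by rewrite (set_nth_default v) ?nth_index ?mem_sq.
Qed.

Lemma gv_lt s u v : u \in Vs s -> v \in Vs s -> (gv s u < gv s v) = (v < u).
Proof.
move=> hu hv.
have iu : index u (sq s) < size (sq s) by rewrite index_mem mem_sq.
have iv : index v (sq s) < size (sq s) by rewrite index_mem mem_sq.
rewrite (gvE hu) (gvE hv) (set_nth_default u v) ?sub_lt //.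
rewrite (sorted_nth_lt u (sq_sorted s) (sub_lt iu) (sub_lt iv)) sub_cmp //.
by rewrite -(sorted_nth_lt u (sq_sorted s) iv iu) !nth_index ?mem_sq.
Qed.

Definition ff (s : 'S_n) (x : 'I_n) : 'I_n :=
  if x \in Iab then gv s (s (rho x)) else s x.

Lemma sVs (s : 'S_n) (x : 'I_n) : (s x \in Vs s) = (x \in Iab).
Proof. by rewrite /Vs mem_imset //; apply: perm_inj. Qed.

Lemma ff_inj s : injective (ff s).
Proof.
move=> x y; rewrite /ff.
case hx: (x \in Iab); case hy: (y \in Iab).
- move=> e; have := congr1 (gv s) e; rewrite !gvK ?sVs ?rhoI //.
  move/perm_inj => e2; have := congr1 rho e2.
  rewrite !rhoK //; move: hx hy; rewrite !inE; lia.
- move=> e; have := gv_mem (s := s) (v := s (rho x)); rewrite sVs rhoI // e sVs hy.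
  by move/(_ isT).
- move=> e; have := gv_mem (s := s) (v := s (rho y)); rewrite sVs rhoI // -e sVs hx.
  by move/(_ isT).
- exact: perm_inj.
Qed.

Definition Phi (s : 'S_n) : 'S_n := perm (@ff_inj s).

Lemma PhiE s x : Phi s x = ff s x.
Proof. by rewrite permE. Qed.

Lemma Vs_Phi s : Vs (Phi s) = Vs s.
Proof.
apply/setP => v; apply/idP/idP.
  case/imsetP => x hx ->; rewrite PhiE /ff hx; apply: gv_mem; rewrite sVs rhoI //.
move=> hv; have hg := gv_mem hv.
case/imsetP: hg => z hz ez.
apply/imsetP; exists (rho z); first exact: rhoI.
rewrite PhiE /ff rhoI // rhoK; last by move: hz; rewrite inE; lia.
by rewrite -ez gvK.
Qed.

Lemma PhiK s : Phi (Phi s) = s.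
Proof.
apply/permP => x; rewrite PhiE /ff.
case hx: (x \in Iab); last by rewrite PhiE /ff hx.
rewrite /gv /sq Vs_Phi -/(sq s) -/(gv s _) PhiE /ff rhoI // rhoK; last by move: hx; rewrite inE; lia.
by rewrite gvK // sVs.
Qed.

Lemma wd_Phi_out s x : ~~ (a < x < b) -> wd (Phi s) x = wd s x.
Proof.
move=> h; case: (ltnP x n) => hx; last by rewrite !wd_out.
have -> : x = Ordinal hx by [].
by rewrite !wdE PhiE /ff inE (negbTE h).
Qed.

Lemma wd_Phi_in s (X : 'I_n) : a < X < b ->
  wd (Phi s) X = (gv s (s (rho X))).+1.
Proof. by move=> h; rewrite wdE PhiE /ff inE h. Qed.

Lemma wd_rho s (X : 'I_n) : a <= X <= b -> wd s (a + b - X) = (s (rho X)).+1.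
Proof. by move=> h; rewrite -wdE rho_val. Qed.

Section Ext.
Variable s : 'S_n.
Hypothesis Hmin : forall z, a < z <= b -> wd s a < wd s z.
Hypothesis Hmax : forall z, a <= z < b -> wd s z < wd s b.

Lemma Vs_bounds v : v \in Vs s -> wd s a < v.+1 < wd s b.
Proof.
case/imsetP => z; rewrite inE => hz ->; rewrite -wdE; apply/andP; split.
  apply: Hmin; lia.
apply: Hmax; lia.
Qed.

Lemma Phi_in_bounds x : a < x < b -> wd s a < wd (Phi s) x < wd s b.
Proof.
move=> h; have hx : x < n by lia.
have [X eX] : exists X : 'I_n, nat_of_ord X = x by exists (Ordinal hx).
subst x; rewrite (wd_Phi_in s h); apply: Vs_bounds; apply: gv_mem; rewrite sVs rhoI // inE; exact: h.
Qed.

Lemma Phi_in_cmp x y : a < x < b -> a < y < b ->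
  (wd (Phi s) x < wd (Phi s) y) = (wd s (a + b - y) < wd s (a + b - x)).
Proof.
move=> h1 h2; have hx : x < n by lia. have hy : y < n by lia.
have [X eX] : exists X : 'I_n, nat_of_ord X = x by exists (Ordinal hx).
have [Y eY] : exists Y : 'I_n, nat_of_ord Y = y by exists (Ordinal hy).
subst x y.
rewrite (wd_Phi_in s h1) (wd_Phi_in s h2) (wd_rho s (X:=X)) ?(wd_rho s (X:=Y)); try lia.
rewrite !ltnS gv_lt // sVs rhoI // inE //.
Qed.

Lemma Phi_cmp x y : a <= x <= b -> a <= y <= b ->
  (wd (Phi s) x < wd (Phi s) y) = (wd s (a + b - y) < wd s (a + b - x)).
Proof.
move=> h1 h2.
have Pa : wd (Phi s) a = wd s a by rewrite wd_Phi_out //; lia.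
have Pb : wd (Phi s) b = wd s b by rewrite wd_Phi_out //; lia.
have ab : a = b \/ a < b by lia.
case: ab => [eab|ab].
  have -> : x = a by lia. have -> : y = a by lia. by rewrite !ltnn.
have Hab := Hmax (z:=a) ltac:(lia).
have ci : forall z, a < z < b -> a < a + b - z < b by move=> z; lia.
have Hm : forall z, a < z < b -> wd s a < wd s z by move=> z hz; apply: Hmin; lia.
have HM : forall z, a < z < b -> wd s z < wd s b by move=> z hz; apply: Hmax; lia.
have ea : a + b - a = b by lia. have eb : a + b - b = a by lia.
have cx : x = a \/ x = b \/ a < x < b by lia.
have cy : y = a \/ y = b \/ a < y < b by lia.
case: cx => [->|[->|hx]]; case: cy => [->|[->|hy]]; rewrite ?ea ?eb ?Pa ?Pb ?ltnn //.
- have := Phi_in_bounds hy; have := Hm _ (ci _ hy); have := HM _ (ci _ hy).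
  move=> H1 H2 /andP[H3 H4]; apply/idP/idP; lia.
- have := Phi_in_bounds hy; have := Hm _ (ci _ hy); have := HM _ (ci _ hy).
  move=> H1 H2 /andP[H3 H4]; apply/idP/idP; lia.
- have := Phi_in_bounds hx; have := Hm _ (ci _ hx); have := HM _ (ci _ hx).
  move=> H1 H2 /andP[H3 H4]; apply/idP/idP; lia.
- have := Phi_in_bounds hx; have := Hm _ (ci _ hx); have := HM _ (ci _ hx).
  move=> H1 H2 /andP[H3 H4]; apply/idP/idP; lia.
- exact: Phi_in_cmp.
Qed.
End Ext.
End Seg.


Lemma chain_min m n (X : nat -> nat -> bool) (s : 'S_n) a r d : m = d.+2 ->
  (forall u, 0 < u < m -> X 0 u) ->
  (forall k, k <= r -> occ m X s (a + k * d)) ->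
  forall z, a < z <= a + r * d + m.-1 -> wd s a < wd s z.
Proof.
move=> md e0 ch.
suff H : forall r', r' <= r -> forall z, a < z <= a + r' * d + m.-1 -> wd s a < wd s z.
  exact: H.
elim=> [|r' IH] hr z hz.
  have /occP [_ H] := ch 0 (leq0n _).
  have := H 0 (z - a) ltac:(lia) ltac:(lia).
  rewrite mul0n !addn0 (_ : a + (z - a) = z); last lia.
  by move=> ->; apply: e0; lia.
case: (leqP z (a + r' * d + m.-1)) => hz2.
  by apply: IH; [lia | lia].
have /occP [_ H] := ch r'.+1 hr.
rewrite mulSn in H hz.
have hc : wd s a < wd s (a + (d + r' * d)).
  apply: IH; lia.
apply: (ltn_trans hc).
have := H 0 (z - (a + (d + r' * d))) ltac:(lia) ltac:(lia).
rewrite addn0 (_ : a + (d + r' * d) + (z - (a + (d + r' * d))) = z); last lia.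
by move=> ->; apply: e0; lia.
Qed.

Lemma chain_max m n (X : nat -> nat -> bool) (s : 'S_n) r d : m = d.+2 ->
  (forall u, u < m.-1 -> X u m.-1) ->
  forall a, (forall k, k <= r -> occ m X s (a + k * d)) ->
  forall z, a <= z < a + r * d + m.-1 ->
    wd s z < wd s (a + r * d + m.-1).
Proof.
move=> md em; elim: r => [|r IH] a ch z hz.
  have /occP [_ H] := ch 0 (leq0n _).
  move: hz; rewrite mul0n !addn0 => hz.
  rewrite mul0n addn0 in H.
  have := H (z - a) m.-1 ltac:(lia) ltac:(lia).
  rewrite (_ : a + (z - a) = z); last lia.
  by move=> ->; apply: em; lia.
have ch' : forall k, k <= r -> occ m X s (a + d + k * d).
  by move=> k hk; rewrite -addnA -mulSn; apply: ch.
have eb : a + r.+1 * d + m.-1 = a + d + r * d + m.-1.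
  by rewrite mulSn; lia.
rewrite eb.
case: (leqP (a + d) z) => hz2.
  by apply: IH => //; move: hz; rewrite eb; lia.
have /occP [_ H] := ch 0 (leq0n _).
rewrite mul0n addn0 in H.
have h1 : wd s z < wd s (a + m.-1).
  have := H (z - a) m.-1 ltac:(lia) ltac:(lia).
  rewrite (_ : a + (z - a) = z); last lia.
  by move=> ->; apply: em; lia.
apply: (ltn_trans h1); apply: IH => //.
lia.
Qed.

Lemma occ_Phi_out m n (Y : nat -> nat -> bool) (s : 'S_n) a b (Hbn : b < n) j :
  (j + m.-1 <= a \/ b <= j) -> occ m Y (Phi a Hbn s) j = occ m Y s j.
Proof.
move=> h.
have e : forall u, u < m -> wd (Phi a Hbn s) (j + u) = wd s (j + u).
  by move=> u hu; rewrite wd_Phi_out //; apply/negP => /andP[h1 h2]; lia.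
by apply/idP/idP => /occP [h1 H]; apply/occP; split=> // u v hu hv;
  rewrite -H // ?e // -?e.
Qed.

Lemma seg_transfer m n (X : nat -> nat -> bool) (s : 'S_n) a r d (md : m = d.+2)
  (Hbn : a + r * d + m.-1 < n) :
  Hpat m X -> (forall k, k <= r -> occ m X s (a + k * d)) ->
  forall k, k <= r -> occ m (RC m X) (Phi a Hbn s) (a + k * d).
Proof.
move=> HX ch; case: HX => m3 e0 em _.
have Hmin := chain_min md e0 ch.
have Hmax := chain_max md em ch.
move=> k hk.
have kr : k * d <= r * d by rewrite leq_mul2r hk orbT.
have Hb : a + r * d + m.-1 < n := Hbn.
apply/occP; split; first lia.
move=> u v hu hv.
rewrite (Phi_cmp Hbn Hmin Hmax); try lia.
have /occP [_ H] := ch (r - k) (leq_subr _ _).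
rewrite /RC -H; try lia.
rewrite mulnBl.
have -> : a + (a + r * d + m.-1) - (a + k * d + v)
        = a + (r * d - k * d) + (m.-1 - v) by lia.
have -> : a + (a + r * d + m.-1) - (a + k * d + u)
        = a + (r * d - k * d) + (m.-1 - u) by lia.
by [].
Qed.


Lemma card_inv (T : finType) (f : T -> T) (P Q : pred T) :
  (forall x, f (f x) = x) -> (forall x, P x -> Q (f x)) -> (forall x, Q x -> P (f x)) ->
  #|[set x | P x]| = #|[set x | Q x]|.
Proof.
move=> K PQ QP; have inj : injective f by apply: (can_inj K).
apply/eqP; rewrite eqn_leq; apply/andP; split.
  rewrite -(card_imset _ inj); apply: subset_leq_card; apply/subsetP => y.
  by case/imsetP => x; rewrite !inE => hx ->; apply: PQ.
rewrite -(card_imset _ inj); apply: subset_leq_card; apply/subsetP => y.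
by case/imsetP => x; rewrite !inE => hx ->; apply: QP.
Qed.

Lemma mem_le_sumn (A : seq nat) i : i \in A -> i <= sumn A.
Proof.
elim: A => [|j A IH] //=; rewrite in_cons => /orP[/eqP ->|h]; first exact: leq_addr.
by apply: leq_trans (IH h) (leq_addl _ _).
Qed.

Section Core.
Variables (m n : nat) (R : nat -> nat -> bool) (HR : Hpat m R) (A : seq nat).
Variable d : nat.
Hypothesis md : m = d.+2.

Definition Qt (t : nat) (s : 'S_n) : bool :=
  all (fun i => if i < t then occ m (RC m R) s i else occ m R s i) A.

Hypothesis good : forall i j, i \in A -> j \in A -> i < j -> d <= j - i.

Definition cut t := forall i, i \in A -> i < t -> i + d \in A -> i + d < t.

Let BIG := (sumn A).+1.

Lemma Q_end t : (forall i, i \in A -> i < t) -> Qt t =1 Qt BIG.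
Proof.
move=> h s; apply: eq_in_all => i hi.
by rewrite (h i hi) (leq_ltn_trans (mem_le_sumn hi) (ltnSn _)).
Qed.

Section Step.
Variables (t a r : nat).
Hypothesis ct : cut t.
Hypothesis aA : a \in A.
Hypothesis ta : t <= a.
Hypothesis amin : forall i, i \in A -> t <= i -> a <= i.
Hypothesis chA : forall k, k <= r -> a + k * d \in A.
Hypothesis chN : a + r.+1 * d \notin A.

Let t' := a + r * d + 1.
Let b := a + r * d + m.-1.

Lemma cls_left i : i \in A -> i < t -> i + m.-1 <= a.
Proof.
move=> iA it; have g := good iA aA ltac:(lia).
case: (ltngtP (a - i) d) => h; try lia.
have : i + d < t by apply: ct => //; rewrite (_ : i + d = a) //; lia.
lia.
Qed.

Lemma cls_right i : i \in A -> t' <= i -> b <= i.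
Proof.
move=> iA it; have cA := chA (leqnn r).
have g := good cA iA ltac:(rewrite /t' in it; lia).
case: (ltngtP (i - (a + r * d)) d) => h; try (rewrite /b /t' in it *; lia).
move: chN; rewrite (_ : a + r.+1 * d = i) ?iA //.
rewrite mulSn; rewrite /t' in it; lia.
Qed.

Lemma cls_mid i : i \in A -> t <= i < t' -> exists2 k, k <= r & i = a + k * d.
Proof.
move=> iA /andP[ti it']; have ai := amin iA ti.
have d0 : 0 < d by case: HR => m3 _ _ _; lia.
have ed := divn_eq (i - a) d.
have rl := ltn_pmod (i - a) d0.
set q := (i - a) %/ d in ed; set rm := (i - a) %% d in ed rl.
have qr : q <= r.
  rewrite -(leq_pmul2r d0); rewrite /t' in it'; lia.
exists q => //.
case: (posnP rm) => h; first lia.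
have := good (chA qr) iA ltac:(lia).
lia.
Qed.

Lemma step_card : #|[set s | Qt t s]| = #|[set s | Qt t' s]|.
Proof.
have cA := chA (leqnn r).
case: (ltnP b n) => Hbn; last first.
  have H1 : forall s : 'S_n, Qt t s -> False.
    move=> s /allP /(_ _ cA); rewrite ifF; last lia.
    case/occP => h _; rewrite /b in Hbn; lia.
  have H2 : forall s : 'S_n, Qt t' s -> False.
    move=> s /allP /(_ _ cA); rewrite ifT; last by rewrite /t'; lia.
    case/occP => h _; rewrite /b in Hbn; lia.
  rewrite (eq_card0 (A := [set s | Qt t s])); last first.
    by move=> s; rewrite inE; apply/negP => /H1.
  rewrite (eq_card0 (A := [set s | Qt t' s])) //.
  by move=> s; rewrite inE; apply/negP => /H2.
have HR' := Hpat_RC HR.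
apply: (card_inv (f := Phi a Hbn)).
- exact: PhiK.
- move=> s /allP Hs; apply/allP => i iA.
  case: (ltnP i t) => it.
    rewrite ifT; last by rewrite /t'; lia.
    have := Hs i iA; rewrite it => h.
    by rewrite occ_Phi_out //; left; apply: cls_left.
  case: (ltnP i t') => it'.
    have [k kr ->] := cls_mid iA ltac:(lia).
    apply: (seg_transfer md) => //.
    move=> k' hk'; have h := Hs _ (chA hk').
    have nt : (a + k' * d < t) = false.
      by apply/negbTE; rewrite -leqNgt; exact: leq_trans ta (leq_addr _ _).
    by rewrite nt in h.
  have := Hs i iA; rewrite ifF; last lia.
  by move=> h; rewrite occ_Phi_out //; right; apply: cls_right.
- move=> s /allP Hs; apply/allP => i iA.
  case: (ltnP i t) => it.
    have := Hs i iA; rewrite ifT; last by rewrite /t'; lia.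
    by move=> h; rewrite occ_Phi_out //; left; apply: cls_left.
  case: (ltnP i t') => it'.
    have [k kr ->] := cls_mid iA ltac:(lia).
    rewrite -occ_RCRC.
    apply: (seg_transfer md) => //.
    move=> k' hk'; have h := Hs _ (chA hk').
    have nt : (a + k' * d < t') = true.
      rewrite /t'; have : k' * d <= r * d by rewrite leq_mul2r hk' orbT.
      lia.
    by rewrite nt in h.
  have := Hs i iA; rewrite ifF; last lia.
  by move=> h; rewrite occ_Phi_out //; right; apply: cls_right.
Qed.

End Step.
End Core.


Lemma cut_next m (R : nat -> nat -> bool) (HR : Hpat m R) (A : seq nat) d (md : m = d.+2)
  (good : forall i j, i \in A -> j \in A -> i < j -> d <= j - i) t a r :
  cut A d t -> a \in A -> t <= a -> (forall i, i \in A -> t <= i -> a <= i) ->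
  (forall k, k <= r -> a + k * d \in A) -> a + r.+1 * d \notin A ->
  cut A d (a + r * d + 1).
Proof.
move=> ct aA ta amin chA chN i iA it idA.
case: (ltnP i t) => h.
  have := ct i iA h idA; lia.
have [k kr ek] := cls_mid HR md good aA ta amin chA chN iA ltac:(lia).
case: (ltngtP k r) => hk.
- have : k.+1 * d <= r * d by rewrite leq_mul2r hk orbT.
  rewrite ek mulSn; lia.
- lia.
- by move: chN; rewrite -hk mulSn (_ : a + (d + k * d) = i + d) ?idA //; lia.
Qed.

Lemma core_count m n (R : nat -> nat -> bool) (HR : Hpat m R) (A : seq nat) :
  #|[set s : 'S_n | all (occ m R s) A]| = #|[set s : 'S_n | all (occ m (RC m R) s) A]|.
Proof.
have [d md] : exists d, m = d.+2 by case: HR => m3 _ _ _; exists (m - 2); lia.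
have HR' := Hpat_RC HR.
set goodb := all (fun i => all (fun j => (i < j) ==> (d <= j - i)) A) A.
have goodE : forall X : nat -> nat -> bool, Hpat m X ->
    forall s : 'S_n, all (occ m X s) A -> goodb.
  move=> X HX s /allP H; apply/allP => i iA; apply/allP => j jA; apply/implyP => ij.
  have := occ_gap HX (H i iA) (H j jA) ij; lia.
case gb: goodb; last first.
  rewrite (eq_card0 (A := [set s : 'S_n | all (occ m R s) A])); last first.
    by move=> s; rewrite inE; apply/negP => /(goodE _ HR s); rewrite gb.
  rewrite (eq_card0 (A := [set s : 'S_n | all (occ m (RC m R) s) A])) //.
  by move=> s; rewrite inE; apply/negP => /(goodE _ HR' s); rewrite gb.
have good : forall i j, i \in A -> j \in A -> i < j -> d <= j - i.
  move=> i j iA jA ij; move/allP: gb => /(_ i iA) /allP /(_ j jA) /implyP; exact.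
have zero : forall t, count (fun i => t <= i) A = 0 ->
    #|[set s : 'S_n | Qt m R A t s]| = #|[set s : 'S_n | Qt m R A (sumn A).+1 s]|.
  move=> t /eqP; rewrite -leqn0 leqNgt -has_count => /hasPn H.
  apply: eq_card => s; rewrite !inE; apply: Q_end => i iA.
  by have := H i iA; rewrite -ltnNge.
suff main : forall N t, count (fun i => t <= i) A <= N -> cut A d t ->
    #|[set s : 'S_n | Qt m R A t s]| = #|[set s : 'S_n | Qt m R A (sumn A).+1 s]|.
  have e0 : [set s : 'S_n | all (occ m R s) A] = [set s : 'S_n | Qt m R A 0 s].
    by apply/setP => s; rewrite !inE; apply: eq_all => i.
  have e1 : [set s : 'S_n | all (occ m (RC m R) s) A]
          = [set s : 'S_n | Qt m R A (sumn A).+1 s].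
    apply/setP => s; rewrite !inE; apply: eq_in_all => i iA.
    by rewrite ifT //; have := mem_le_sumn iA; lia.
  rewrite e0 e1; apply: (main (count (fun i => 0 <= i) A)) => //.
elim=> [|N IH] t hN ct.
  by apply: zero; lia.
case: (posnP (count (fun i => t <= i) A)) => hc; first exact: zero.
have hex : exists i, (i \in A) && (t <= i).
  by move: hc; rewrite -has_count => /hasP [i iA ti]; exists i; rewrite iA ti.
case: (ex_minnP hex) => a /andP[aA ta] amin'.
have amin : forall i, i \in A -> t <= i -> a <= i.
  by move=> i iA ti; apply: amin'; rewrite iA ti.
have d0 : 0 < d by case: HR => m3 _ _ _; lia.
have hex2 : exists k, a + k.+1 * d \notin A.
  exists (sumn A); apply/negP => h; have := mem_le_sumn h.
  have : (sumn A).+1 <= (sumn A).+1 * d by rewrite leq_pmulr.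
  lia.
case: (ex_minnP hex2) => r chN rmin.
have chA : forall k, k <= r -> a + k * d \in A.
  case=> [|k] hk; first by rewrite mul0n addn0.
  apply/negPn/negP => h; have := rmin k h; lia.
rewrite (step_card n HR md good ct aA ta amin chA chN).
apply: IH; last exact: (cut_next HR md good ct aA ta amin chA chN).
have : count (fun i => a + r * d + 1 <= i) A < count (fun i => t <= i) A.
  apply: count_lt_sub => [i|]; first lia.
  by exists a => //; rewrite ta /=; lia.
lia.
Qed.

Definition cmp n (s : 'S_n) : 'S_n := (s * perm (@rev_ord_inj n))%g.

Lemma cmpK n (s : 'S_n) : cmp (cmp s) = s.
Proof. by apply/permP => x; rewrite /cmp !permM !permE rev_ordK. Qed.

Lemma wd_cmp n (s : 'S_n) x : x < n -> wd (cmp s) x = n - (wd s x).-1.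
Proof.
move=> hx; have [X <-] : exists X : 'I_n, nat_of_ord X = x by exists (Ordinal hx).
by rewrite !wdE /cmp permM permE /=; have := ltn_ord (s X); lia.
Qed.

Lemma occ_cmp m n (R : nat -> nat -> bool) (s : 'S_n) i :
  occ m R (cmp s) i = occ m (fun u v => R v u) s i.
Proof.
have key : i + m <= n -> forall u v, u < m -> v < m ->
    (wd (cmp s) (i + u) < wd (cmp s) (i + v)) = (wd s (i + v) < wd s (i + u)).
  move=> h u v hu hv; rewrite !wd_cmp; try lia.
  have := wd_lt s (x := i + u) ltac:(lia); have := wd_lt s (x := i + v) ltac:(lia).
  move=> h1 h2; apply/idP/idP; lia.
apply/idP/idP => /occP [h H]; apply/occP; split=> // u v hu hv.
  by rewrite -H // key.
by rewrite key // H.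
Qed.

Lemma count_cmp m n (R : nat -> nat -> bool) (A : seq nat) :
  #|[set s : 'S_n | all (occ m R s) A]| =
  #|[set s : 'S_n | all (occ m (fun u v => R v u) s) A]|.
Proof.
apply: (card_inv (f := @cmp n)); first exact: cmpK.
  move=> s /allP H; apply/allP => i iA; rewrite -occ_cmp cmpK; exact: H.
move=> s /allP H; apply/allP => i iA; rewrite occ_cmp; exact: H.
Qed.

Lemma incl_excl (X U : finType) (f g : X -> {set U}) :
  (forall B : {set U}, #|[set x | B \subset f x]| = #|[set x | B \subset g x]|) ->
  forall B : {set U}, #|[set x | f x == B]| = #|[set x | g x == B]|.
Proof.
move=> H.
have sumE : forall (h : X -> {set U}) (B : {set U}), #|[set x | B \subset h x]| =
    \sum_(C : {set U} | B \subset C) #|[set x | h x == C]|.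
  move=> h B; rewrite -sum1_card (partition_big h (fun C => B \subset C)); last first.
    by move=> x; rewrite inE.
  apply: eq_bigr => C BC; rewrite -sum1_card; apply: eq_bigl => x.
  rewrite !inE; apply/idP/idP; first by case/andP.
  by move=> /eqP hx; rewrite hx BC eqxx.
suff main : forall k (B : {set U}), #|~: B| < k -> #|[set x | f x == B]| = #|[set x | g x == B]|.
  by move=> B; apply: (main #|~: B|.+1).
elim=> [//|k IH] B hB.
have := H B; rewrite !sumE (bigD1 B) //= (bigD1 B (P := fun C => B \subset C)) //=.
have -> : \sum_(C : {set U} | (B \subset C) && (C != B)) #|[set x | f x == C]| =
          \sum_(C : {set U} | (B \subset C) && (C != B)) #|[set x | g x == C]|.
  apply: eq_bigr => C /andP[BC CB]; apply: IH.
  have pr : B \proper C by rewrite properEneq eq_sym CB.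
  rewrite -properC in pr; have := proper_card pr; lia.
by move/addIn.
Qed.

Lemma wd_rev m (p : 'S_m) u : u < m -> wd (rev_perm p) u = wd p (m.-1 - u).
Proof.
move=> hu; have [U <-] : exists U : 'I_m, nat_of_ord U = u by exists (Ordinal hu).
have h2 : m.-1 - U < m by lia.
rewrite wdE (_ : m.-1 - U = Ordinal h2) // wdE /rev_perm permM permE.
by congr (p _).+1; apply: val_inj => /=; lia.
Qed.

Lemma Em_bound m n (p : 'S_m) (s : 'S_n) j : j \in Em p s -> j < n.+2.
Proof. rewrite /Em mem_filter mem_iota => /andP[_]; lia. Qed.

Unset Implicit Arguments.

Theorem theorem5p6 (m : nat) (p : 'S_m) :
  head 0 (pword p) = 1 -> last 0 (pword p) = m -> size (overlaps p) = 2 ->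
  super_strongly_cWilf p (rev_perm p).
Proof.
move=> hh hl ho n S.
have HR := Hp_of hh hl ho.
set q := rev_perm p.
have key : forall L : seq nat, #|[set s : 'S_n | all (occ m (Rp p) s) L]| =
                              #|[set s : 'S_n | all (occ m (Rp q) s) L]|.
  move=> L; rewrite core_count // count_cmp.
  apply: eq_card => s; rewrite !inE; apply: eq_all => i.
  apply: occ_ext => u v hu hv; rewrite /RC /Rp /q !wd_rev //; try lia.
pose Eset (r : 'S_m) (s : 'S_n) : {set 'I_n.+2} := [set i : 'I_n.+2 | val i \in Em r s].
have sub : forall r : 'S_m, forall B : {set 'I_n.+2}, forall s : 'S_n,
    (B \subset Eset r s) = (ord0 \notin B) && all (occ m (Rp r) s) [seq (val i).-1 | i <- enum B].
  move=> r B s; apply/idP/idP.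
    move/subsetP => H; apply/andP; split.
      by apply/negP => /H; rewrite inE mem_Em.
    rewrite all_map; apply/allP => i; rewrite mem_enum => /H; rewrite inE mem_Em.
    by case/andP.
  case/andP => h0 /allP H; apply/subsetP => i iB; rewrite inE mem_Em.
  have -> : 0 < i.
    case: (posnP i) => // e; have ei : i = ord0 by apply: val_inj.
    by move: h0; rewrite -ei iB.
  by apply: H; apply/mapP; exists i; rewrite ?mem_enum.
case: (boolP (all (fun j => j < n.+2) S)) => hS; last first.
  have [j jS jN] : exists2 j, j \in S & n.+2 <= j.
    by move: hS; rewrite -has_predC => /hasP [j jS /=]; rewrite -leqNgt; exists j.
  rewrite /acount (eq_card0 (A := [set s : 'S_n | _ && _])); last first.
    move=> s; rewrite inE; apply/negP => /andP[_ /allP /(_ j jS)] /Em_bound; lia.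
  rewrite (eq_card0 (A := [set s : 'S_n | _ && _])) //.
  move=> s; rewrite inE; apply/negP => /andP[_ /allP /(_ j jS)] /Em_bound; lia.
set SS : {set 'I_n.+2} := [set i : 'I_n.+2 | val i \in S].
have accE : forall r : 'S_m, acount r n S = #|[set s : 'S_n | Eset r s == SS]|.
  move=> r; apply: eq_card => s; rewrite !inE; apply/idP/idP.
    case/andP => /allP H1 /allP H2; apply/eqP/setP => i; rewrite !inE.
    by apply/idP/idP => h; [apply: H1 | apply: H2].
  move/eqP/setP => E; apply/andP; split; apply/allP => j hj.
    have hjN := Em_bound hj.
    by have := E (Ordinal hjN); rewrite !inE /= hj.
  have hjN : j < n.+2 by move/allP: hS => /(_ j hj).
  by have := E (Ordinal hjN); rewrite !inE /= hj.
rewrite !accE; apply: incl_excl => B.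
set L := [seq (val i).-1 | i <- enum B].
have e : forall r : 'S_m, #|[set x : 'S_n | B \subset Eset r x]| =
    #|[set x : 'S_n | (ord0 \notin B) && all (occ m (Rp r) x) L]|.
  by move=> r; apply: eq_card => x; rewrite !inE sub.
rewrite !e.
case: (boolP (ord0 \in B)) => h0 /=.
  by rewrite !(eq_card0 (A := [set s : 'S_n | false])) // => s; rewrite inE.
exact: key.
Qed.
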